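(* Let $X=\{0,1\}^{\mathbb Z}$, $\mu=(\tfrac12,\tfrac12)^{\mathbb Z}$, $T$ the two-sided shift, and $d(x,x')=\sum_{k\in\mathbb Z}2^{-|k|-2}|x_k-x'_k|$; let $\mathbf X=(X,d,\mu,T)$. With the finite array cubes equipped with the coordinate Euclidean metrics, for every $m\ge1$ and every $p\ge1$, \[\mathrm{Dep}_{2,m,p}(\mathbf X,\mathbf X)\ge\frac{5}{144\sqrt2}.\]
   Context: For a compact metric measure-preserving system $(X,d,\mu,T)$ paired with itself, $\mathcal J(T,T)$ is the set of Borel probability measures on $X\times X$ with both marginals $\mu$ invariant under $T\times T$. For $z_i=(x_i,y_i)$, $\mathcal D^X_{n,m}=(d(T^ax_i,T^bx_j))_{1\le i,j\le n,0\le a,b<m}$, $\mathcal D^Y_{n,m}=(d(T^ay_i,T^by_j))_{1\le i,j\le n,0\le a,b<m}$, $\Phi_{n,m}(\lambda)=\mathrm{Law}_{\lambda^{\otimes n}}(\mathcal D^X_{n,m},\mathcal D^Y_{n,m})$. $W_p$ is the $p$-Wasserstein distance on the finite array cube and $\mathrm{Dep}_{n,m,p}(\mathbf X,\mathbf X)=\sup_{\lambda\in\mathcal J(T,T)}W_p(\Phi_{n,m}(\lambda),\Phi_{n,m}(\mu\otimes\mu))$. *)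

(* Defs.v *)
From HB Require Import structures.
From mathcomp Require Import all_boot all_order all_algebra.
From mathcomp Require Import all_classical all_reals all_analysis.
Set Implicit Arguments. Unset Strict Implicit. Unset Printing Implicit Defensive.
Import Order.TTheory GRing.Theory Num.Theory.
Local Open Scope classical_set_scope.
Local Open Scope ring_scope.

Definition cylinders (I : Type) d (T : measurableType d) : set (set (I -> T)) :=
  [set S | exists i (A : set T), measurable A /\ S = [set f | A (f i)]].

Definition prodfun (I : Type) d (T : measurableType d) :=
  g_sigma_algebraType (@cylinders I d T).

(* X = {0,1}^Z with its product (= Borel) sigma-algebra *)
Definition X := prodfun int bool.

Definition shift (x : X) : X := fun k => x (k + 1)%R.

Definition shift2 (z : X * X) : X * X := (shift z.1, shift z.2).

Definition dX (R : realType) (x x' : X) : R :=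
  fine (\esum_(k in [set: int])
          (((2 : R) ^- (`|k|%N + 2)) * `|(x k)%:R - (x' k)%:R|)%:E).

(* mu is the Bernoulli (1/2,1/2)^Z measure: cylinder sets fixing the values
   on a finite set s of coordinates have measure 2^{-|s|}. *)
Definition bernoulli_half (R : realType) (mu : probability X R) : Prop :=
  forall (s : seq int) (b : int -> bool), uniq s ->
    mu [set x : X | all (fun k => x k == b k) s] = ((2 : R) ^- size s)%:E.

Definition joining (R : realType) (mu : probability X R)
    (lam : probability (X * X)%type R) : Prop :=
  [/\ (forall A : set X, measurable A -> lam (A `*` setT) = mu A),
      (forall A : set X, measurable A -> lam (setT `*` A) = mu A) &
      (forall A : set (X * X), measurable A -> lam (shift2 @^-1` A) = lam A)].

Definition idx (m : nat) := ('I_2 * 'I_2 * 'I_m * 'I_m)%type.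

Definition cube (R : realType) (m : nat) := prodfun (idx m) R.

Definition cube2 (R : realType) (m : nat) := (cube R m * cube R m)%type.

Definition cube_dist (R : realType) (m : nat) (u v : cube2 R m) : R :=
  Num.sqrt (\sum_(t : idx m) (u.1 t - v.1 t) ^+ 2
          + \sum_(t : idx m) (u.2 t - v.2 t) ^+ 2).

(* (D^X_{2,m}, D^Y_{2,m}) for the sample z_1 = (x_1,y_1), z_2 = (x_2,y_2) *)
Definition sample (i : 'I_2) (w : (X * X) * (X * X)) : X * X :=
  if val i == 0%N then w.1 else w.2.

Definition Dmap (R : realType) (m : nat) (w : (X * X) * (X * X)) : cube2 R m :=
  ((fun t : idx m => let: (i, j, a, b) := t in
      dX R (iter a shift (sample i w).1) (iter b shift (sample j w).1)) : cube R m,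
   (fun t : idx m => let: (i, j, a, b) := t in
      dX R (iter a shift (sample i w).2) (iter b shift (sample j w).2)) : cube R m).

Definition Phi2 (R : realType) (m : nat) (lam : set (X * X) -> \bar R) :
    set (cube2 R m) -> \bar R :=
  pushforward (lam \x lam)%E (@Dmap R m).

Definition coupling (R : realType) (m : nat) (nu1 nu2 : set (cube2 R m) -> \bar R)
    (pi : probability (cube2 R m * cube2 R m)%type R) : Prop :=
  (forall A : set (cube2 R m), measurable A -> pi (A `*` setT) = nu1 A) /\
  (forall A : set (cube2 R m), measurable A -> pi (setT `*` A) = nu2 A).

Definition Wp (R : realType) (m : nat) (p : R) (nu1 nu2 : set (cube2 R m) -> \bar R)
    : \bar R :=
  poweR (ereal_inf [set (\int[pi]_uv ((cube_dist uv.1 uv.2) `^ p)%:E)%E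
                   | pi in [set pi | coupling nu1 nu2 pi]]) p^-1.

Definition Dep2 (R : realType) (mu : probability X R) (m : nat) (p : R) : \bar R :=
  ereal_sup [set @Wp R m p (@Phi2 R m lam) (@Phi2 R m (mu \x mu)%E)
            | lam in [set lam | joining mu lam]].

(* Main.v *)
Require Import Defs.
From HB Require Import structures.
From mathcomp Require Import all_boot all_order all_algebra.
From mathcomp Require Import all_classical all_reals all_analysis.
From mathcomp Require Import measurable_realfun.
From mathcomp Require Import ring lra.
Import Order.TTheory GRing.Theory Num.Theory.
Local Open Scope classical_set_scope.
Local Open Scope ring_scope.
Lemma mcoord (k : int) : measurable_fun setT (fun x : X => x k).
Proof.
move=> _ A mA; rewrite setTI; apply: sub_sigma_algebra.
by exists k, A; split.
Qed.

Lemma meas_boolbool (P : set (bool * bool)) : measurable P.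
Proof.
have -> : P = ([set true] `*` [set b | P (true, b)]) `|`
              ([set false] `*` [set b | P (false, b)]).
  apply/seteqP; split => [[[] b] /= Pb|[[] b] /= [[/= ? ?]|[/= ? ?]]] //=.
  - by left.
  - by right.
by apply: measurableU; apply: measurableX.
Qed.

Lemma mfun_boolbool d (T : measurableType d) (f : bool * bool -> T) :
  measurable_fun setT f.
Proof. by move=> _ B _; exact: meas_boolbool. Qed.

Definition enat (n : nat) : int := if odd n then Negz n./2 else Posz n./2.

Lemma enat_inj : injective enat.
Proof.
move=> a b; rewrite /enat.
case: (boolP (odd a)) => oa; case: (boolP (odd b)) => ob // [] h.
- by rewrite -[a]odd_double_half -[b]odd_double_half h oa ob.
- by rewrite -[a]odd_double_half -[b]odd_double_half h (negbTE oa) (negbTE ob).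
Qed.

Lemma enat_surj : enat @` [set: nat] = [set: int].
Proof.
apply/seteqP; split => // k _.
case: k => n.
- exists n.*2 => //; by rewrite /enat odd_double doubleK.
- exists n.*2.+1 => //; by rewrite /enat /= odd_double /= uphalf_double.
Qed.

Lemma enat0 n : (enat n == 0) = (n == 0%N).
Proof.
rewrite /enat; case: (boolP (odd n)) => on.
  by case: n on.
apply/idP/idP => [/eqP [] h|/eqP->//].
by rewrite -[n]odd_double_half h (negbTE on).
Qed.
Section S.
Variable R : realType.
Definition term (x y : X) (k : int) : R :=
  ((2 : R) ^- (`|k|%N + 2)) * `|(x k)%:R - (y k)%:R|.

Lemma term_ge0 x y k : 0 <= term x y k.
Proof. by rewrite /term mulr_ge0 // invr_ge0 exprn_ge0. Qed.

Lemma dX_series x y : dX R x y = fine (\sum_(n <oo) (term x y (enat n))%:E)%E.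
Proof.
rewrite /dX (_ : [set: int] = enat @` (xpredT : pred nat)); last first.
  by rewrite -enat_surj; apply/seteqP; split => k [n _ <-]; exists n.
have := @esum_pred_image R _ (fun k => (term x y k)%:E) enat xpredT.
move=> ->//.
- by move=> n _; rewrite lee_fin term_ge0.
- by move=> a b _ _; exact: enat_inj.
Qed.

Lemma mterm k : measurable_fun setT (fun xy : X * X => (term xy.1 xy.2 k)%:E).
Proof.
have -> : (fun xy : X * X => (term xy.1 xy.2 k)%:E) =
  (fun p : bool * bool => (((2 : R) ^- (`|k|%N + 2)) * `|p.1%:R - p.2%:R|)%:E)
  \o (fun xy : X * X => (xy.1 k, xy.2 k)) by [].
apply: measurableT_comp; first exact: mfun_boolbool.
apply: measurable_fun_pair.
- exact: (measurableT_comp (mcoord k) measurable_fst).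
- exact: (measurableT_comp (mcoord k) measurable_snd).
Qed.

Lemma mdX : measurable_fun setT (fun xy : X * X => dX R xy.1 xy.2).
Proof.
rewrite (_ : (fun xy : X * X => dX R xy.1 xy.2) = (fun xy =>
  fine (\sum_(n <oo) (term xy.1 xy.2 (enat n))%:E)%E)); last first.
  by apply/funext => xy; rewrite dX_series.
apply: (measurableT_comp (fine_measurable _)) => //.
have := @ge0_emeasurable_sum _ (X * X)%type R setT
  (fun n xy => (term xy.1 xy.2 (enat n))%:E) xpredT.
apply => //.
- by move=> k xy _ _; rewrite lee_fin term_ge0.
- by move=> k _; apply: mterm.
Qed.
Definition cw (i : nat) : R := (2 : R) ^- (i./2 + 2).

Lemma cw_ge0 i : 0 <= cw i.
Proof. by rewrite /cw invr_ge0 exprn_ge0. Qed.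

Lemma sum_cw2 j : \sum_(0 <= i < j.*2) cw i = 1 - (2 : R) ^- j.
Proof.
elim: j => [|j IH]; first by rewrite big_geq // expr0 invr1 subrr.
rewrite doubleS !big_nat_recr //= IH /cw.
have h1 : (j.*2)./2 = j by rewrite doubleK.
have h2 : (j.*2.+1)./2 = j by rewrite /= uphalf_double.
rewrite h1 h2 !exprD !exprS !invfM; field.
by apply: expf_neq0; rewrite pnatr_eq0.
Qed.

Lemma sum_cw N : \sum_(0 <= i < N) cw i <= 1.
Proof.
rewrite (@le_trans _ _ (\sum_(0 <= i < N.*2) cw i)) //.
  rewrite [leRHS](big_cat_nat _ (n := N)) //=; last by rewrite -addnn leq_addr.
  by rewrite lerDl sumr_ge0 // => i _; exact: cw_ge0.
by rewrite sum_cw2 lerBlDr lerDl invr_ge0 exprn_ge0.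
Qed.

Lemma term_le x y n : term x y (enat n) <= cw n.
Proof.
rewrite /term /cw.
have h1 : `|(x (enat n))%:R - (y (enat n))%:R| <= 1 :> R.
  by case: (x _); case: (y _); rewrite /= ?subrr ?normr0 ?subr0 ?sub0r ?normrN ?normr1.
have h2 : (2 : R) ^- (`|enat n|%N + 2) <= 2 ^- (n./2 + 2).
  rewrite lef_pV2 ?posrE ?exprn_gt0 // ler_eXn2l ?ltr1n // leq_add2r.
  by rewrite /enat; case: (odd n) => //=.
apply: le_trans h2; rewrite -[leRHS]mulr1 ler_wpM2l // invr_ge0 exprn_ge0 //.
Qed.

Lemma series_ge0 x y : (0 <= \sum_(n <oo) (term x y (enat n))%:E)%E.
Proof. by apply: nneseries_ge0 => n _ _; rewrite lee_fin term_ge0. Qed.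

Lemma series_le1 x y : (\sum_(n <oo) (term x y (enat n))%:E <= 1%E)%E.
Proof.
apply: lime_le.
  by apply: is_cvg_nneseries => n _ _; rewrite lee_fin term_ge0.
apply: nearW => N; rewrite sumEFin lee_fin.
apply: le_trans (sum_cw N); apply: ler_sum => i _; exact: term_le.
Qed.

Definition flip0 (y : X) : X := fun k => if k == 0 then ~~ y k else y k.

Lemma dX_split x y : dX R x y = term x y 0 +
  fine (\sum_(1 <= n <oo) (term x y (enat n))%:E)%E.
Proof.
rewrite dX_series (@nneseries_split _ _ 0 1); last by move=> k _; rewrite lee_fin term_ge0.
rewrite big_nat1 /= fineD //.
have h0 : (0 <= \sum_(1 <= n <oo) (term x y (enat n))%:E)%E.
  by apply: nneseries_ge0 => n _ _; rewrite lee_fin term_ge0.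
rewrite ge0_fin_numE // (@le_lt_trans _ _ 1%E) ?ltry //.
apply: le_trans (series_le1 x y).
rewrite (@nneseries_split _ _ 0 1); last by move=> k _; rewrite lee_fin term_ge0.
by rewrite big_nat1 /= leeDr // lee_fin term_ge0.
Qed.

Lemma dX_flip x y : `|dX R x (flip0 y) - dX R x y| = 4^-1.
Proof.
rewrite !dX_split.
have -> : (\sum_(1 <= n <oo) (term x (flip0 y) (enat n))%:E)%E =
          (\sum_(1 <= n <oo) (term x y (enat n))%:E)%E.
  apply: congr_lim; apply/funext => N; apply: eq_big_nat => n /andP[n1 _].
  have : enat n != 0 by rewrite enat0 -lt0n.
  by rewrite /term /flip0 => /negbTE ->.
rewrite opprD addrACA subrr addr0 /term /flip0 eqxx /=.
have h4 : (2 : R) ^- (0 + 2) = 4^-1 by rewrite add0n expr2; congr (_^-1); rewrite -natrM.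
rewrite h4.
by case: (x 0); case: (y 0) => /=; rewrite ?subrr ?normr0 ?subr0 ?sub0r ?normrN ?normr1 ?mulr1 ?mulr0 ?sub0r ?subr0 ?normrN normfV normr_nat.
Qed.
End S.
Definition cyl (s : seq int) (b : int -> bool) : set X :=
  [set x : X | all (fun k => x k == b k) s].

Lemma cyl_meas s b : measurable (cyl s b).
Proof.
elim: s => [|k s IH].
  by rewrite (_ : cyl [::] b = setT) //; apply/seteqP; split.
rewrite (_ : cyl (k :: s) b = [set x : X | [set b k] (x k)] `&` cyl s b).
  apply: measurableI => //; apply: sub_sigma_algebra; by exists k, [set b k].
apply/seteqP; split => x /=.
- by move=> /andP[/eqP -> h]; split.
- by move=> [h1 h2]; apply/andP; split => //; apply/eqP.
Qed.

Definition Gcyl : set (set X) :=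
  [set S | S = set0 \/ exists s b, uniq s /\ S = cyl s b].

Lemma cylT b : cyl [::] b = setT.
Proof. by apply/seteqP; split. Qed.

Lemma G_gen : (@measurable _ X) = <<s Gcyl >>.
Proof.
apply/seteqP; split.
- apply: smallest_sub; first exact: smallest_sigma_algebra.
  move=> _ [i [A [mA ->]]]; apply: sub_sigma_algebra.
  case: (pselect (A true)) => At; case: (pselect (A false)) => Af.
  + right; exists [::], (fun=> true); split => //; rewrite cylT.
    by apply/seteqP; split => // x _ /=; case: (x i).
  + right; exists [:: i], (fun=> true); split => //.
    apply/seteqP; split => x; rewrite /cyl /=; first by case: (x i) => // /Af.
    by rewrite andbT => /eqP ->.
  + right; exists [:: i], (fun=> false); split => //.
    apply/seteqP; split => x; rewrite /cyl /=; first by case: (x i) => // /At.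
    by rewrite andbT => /eqP ->.
  + left; apply/seteqP; split => x //=; by case: (x i) => [/At|/Af].
- apply: smallest_sub; first exact: sigma_algebra_measurable.
  by move=> _ [->|[s [b [_ ->]]]]; [exact: measurable0|exact: cyl_meas].
Qed.

Lemma G_setI : setI_closed Gcyl.
Proof.
move=> _ _ [->|[s1 [b1 [u1 ->]]]] [->|[s2 [b2 [u2 ->]]]];
  try by left; rewrite ?set0I ?setI0.
case: (pselect (exists k, [/\ k \in s1, k \in s2 & b1 k != b2 k])).
  move=> [k [k1 k2 kb]]; left; apply/seteqP; split => // x /= [].
  move=> /allP /(_ _ k1) /eqP h1 /allP /(_ _ k2) /eqP h2.
  by move: kb; rewrite -h1 -h2 eqxx.
move=> nex; right.
exists (undup (s1 ++ s2)), (fun k => if k \in s1 then b1 k else b2 k).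
split; first exact: undup_uniq.
apply/seteqP; split => x /=.
- move=> [/allP h1 /allP h2]; apply/allP => k; rewrite mem_undup mem_cat.
  case: (boolP (k \in s1)) => ks1 /= hk.
    exact: h1.
  exact: h2.
- move=> /allP h; split; apply/allP => k ks.
  + by have := h k; rewrite mem_undup mem_cat ks /=; apply.
  + have := h k; rewrite mem_undup mem_cat ks orbT => /(_ isT).
    case: (boolP (k \in s1)) => // ks1 /eqP ->.
    case: (eqVneq (b1 k) (b2 k)) => // hb; exfalso; apply: nex; by exists k.
Qed.

Section Inv.
Variable R : realType.
Variable mu : probability X R.
Hypothesis Hb : bernoulli_half mu.

Lemma mu_inv (f : X -> X) (mf : measurable_fun setT f) :
  (forall s b, uniq s -> exists s' b', [/\ uniq s', size s' = size s &
      f @^-1` cyl s b = cyl s' b']) ->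
  forall A, measurable A -> mu (f @^-1` A) = mu A.
Proof.
move=> H A mA.
pose f' : {mfun X >-> X} := HB.pack f (isMeasurableFun.Build _ _ _ _ f mf).
have := @measure_unique _ R X Gcyl (fun=> setT) G_gen G_setI _ _
  (distribution mu f') mu _ _ A mA.
apply.
- by move=> _; right; exists [::], xpred0; rewrite cylT.
- by apply/seteqP; split => // x _; exists 0%N.
- move=> _ [->|[s [b [us ->]]]]; first by rewrite !measure0.
  have [s' [b' [us' ss' hc]]] := H s b us.
  change (mu (f @^-1` cyl s b) = mu (cyl s b)).
  by rewrite hc /cyl !Hb // ss'.
- move=> _; change (mu (f @^-1` setT) < +oo)%E.
  by rewrite preimage_setT probability_setT ltry.
Qed.
End Inv.
Lemma mX_gen (f : X -> X) : (forall i (A : set bool), exists j (A' : set bool),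
  f @^-1` [set x | A (x i)] = [set x | A' (x j)]) -> measurable_fun setT f.
Proof.
move=> H; apply: (@measurability _ _ X X setT f (@cylinders int _ bool)) => //.
move=> _ [_ [i [A [mA ->]]] <-]; rewrite setTI.
have [j [A' ->]] := H i A; apply: sub_sigma_algebra; by exists j, A'.
Qed.

Lemma mshift : measurable_fun setT Defs.shift.
Proof.
apply: mX_gen => i A; exists (i + 1), A; by [].
Qed.

Lemma mflip : measurable_fun setT flip0.
Proof.
apply: mX_gen => i A; exists i, [set b | A (if i == 0 then ~~ b else b)].
by apply/seteqP; split => x /=; rewrite /flip0; case: (i == 0).
Qed.

Section Inv2.
Variable R : realType.
Variable mu : probability X R.
Hypothesis Hb : bernoulli_half mu.

Lemma mu_shift A : measurable A -> mu (Defs.shift @^-1` A) = mu A.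
Proof.
move=> mA; apply: (@mu_inv R mu Hb _ mshift _ A mA) => s b us.
exists (map (fun k => k + 1) s), (fun k => b (k - 1)); split.
- by rewrite map_inj_uniq // => u v; apply: addIr.
- by rewrite size_map.
- apply/seteqP; split => x; rewrite /cyl /= all_map /=.
  + by move=> /allP h; apply/allP => k ks /=; rewrite addrK; exact: h.
  + by move=> /allP h; apply/allP => k ks /=; have := h k ks; rewrite /= addrK.
Qed.

Lemma mu_flip A : measurable A -> mu (flip0 @^-1` A) = mu A.
Proof.
move=> mA; apply: (@mu_inv R mu Hb _ mflip _ A mA).
move=> s b us; exists s, (fun k => if k == 0 then ~~ b k else b k); split => //.
apply/seteqP; split => x; rewrite /cyl /=.
- move=> /allP h; apply/allP => k ks /=; have := h k ks; rewrite /flip0.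
  by case: (k == 0) => //; case: (x k); case: (b k).
- move=> /allP h; apply/allP => k ks /=; have := h k ks; rewrite /flip0.
  by case: (k == 0) => //; case: (x k); case: (b k).
Qed.
End Inv2.
Definition diagf (x : X) : X * X := (x, x).
Lemma mdiag : measurable_fun setT diagf.
Proof. exact: measurable_fun_pair. Qed.
HB.instance Definition _ := isMeasurableFun.Build _ _ X (X * X)%type diagf mdiag.

Section Join.
Variable R : realType.
Variable mu : probability X R.
Hypothesis Hb : bernoulli_half mu.

Definition lam : probability (X * X)%type R := distribution mu diagf.

Lemma lam_joining : joining mu lam.
Proof.
split.
- move=> A mA; change (mu (diagf @^-1` (A `*` setT)) = mu A).
  by congr (mu _); apply/seteqP; split => x //=; case.
- move=> A mA; change (mu (diagf @^-1` (setT `*` A)) = mu A).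
  by congr (mu _); apply/seteqP; split => x //=; case.
- move=> A mA; change (mu (Defs.shift @^-1` (diagf @^-1` A)) = mu (diagf @^-1` A)).
  apply: mu_shift => //.
  by have := mdiag measurableT _ mA; rewrite setTI.
Qed.
End Join.

Section Main.
Variable R : realType.
Variable mu : probability X R.
Hypothesis Hb : bernoulli_half mu.

Lemma mcoordc (m : nat) (t : idx m) : measurable_fun setT (fun f : cube R m => f t).
Proof.
move=> _ A mA; rewrite setTI; apply: sub_sigma_algebra.
by exists t, A; split.
Qed.

Definition G2 (w : (X * X) * (X * X)) : R := dX R w.1.1 w.2.1 - dX R w.1.2 w.2.2.

Lemma mG2 : measurable_fun setT G2.
Proof.
have m1 : measurable_fun setT (fun w : (X * X) * (X * X) => dX R w.1.1 w.2.1).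
  have -> : (fun w : (X * X) * (X * X) => dX R w.1.1 w.2.1) =
    (fun xy : X * X => dX R xy.1 xy.2) \o (fun w : (X * X) * (X * X) => (w.1.1, w.2.1)) by [].
  apply: (measurableT_comp (@mdX R)); apply: measurable_fun_pair.
  + exact: (measurableT_comp measurable_fst measurable_fst).
  + exact: (measurableT_comp measurable_fst measurable_snd).
have m2 : measurable_fun setT (fun w : (X * X) * (X * X) => dX R w.1.2 w.2.2).
  have -> : (fun w : (X * X) * (X * X) => dX R w.1.2 w.2.2) =
    (fun xy : X * X => dX R xy.1 xy.2) \o (fun w : (X * X) * (X * X) => (w.1.2, w.2.2)) by [].
  apply: (measurableT_comp (@mdX R)); apply: measurable_fun_pair.
  + exact: (measurableT_comp measurable_snd measurable_fst).
  + exact: (measurableT_comp measurable_snd measurable_snd).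
exact: (measurable_funB m1 m2).
Qed.

Definition S2 : set ((X * X) * (X * X)) := [set w | `|G2 w| < 8^-1].

Lemma S2_meas : measurable S2.
Proof.
have -> : S2 = G2 @^-1` `]-(8^-1), 8^-1[%classic.
  by apply/seteqP; split => w; rewrite /S2 /= in_itv /= ltr_norml.
by have := mG2 measurableT _ (measurable_itv `]-(8^-1 : R), 8^-1[); rewrite setTI.
Qed.

Lemma inner_bound (c : R) (y1 : X) :
  (mu [set y | (`|c - dX R y1 y| < 8^-1)%R] <= (2^-1)%:E)%E.
Proof.
set E := [set y | `|c - dX R y1 y| < 8^-1].
have mE : measurable E.
  have -> : E = (fun y : X => (c - dX R y1 y)%R) @^-1` `]-(8^-1), 8^-1[%classic.
    by apply/seteqP; split => w; rewrite /E /= in_itv /= ltr_norml.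
  have mf : measurable_fun setT (fun y : X => (c - dX R y1 y)%R).
    apply: measurable_funB => //.
    have h := measurableT_comp (@mdX R) (measurable_fun_pair (measurable_cst y1) (@measurable_id _ X setT)).
    exact: h.
  by have := mf measurableT _ (measurable_itv `]-(8^-1 : R), 8^-1[); rewrite setTI.
have mF : measurable (flip0 @^-1` E).
  by have := mflip measurableT _ mE; rewrite setTI.
have dis : E `&` (flip0 @^-1` E) = set0.
  apply/seteqP; split => // y [] /= h1 h2.
  have := dX_flip R y1 y.
  move: h1 h2; set a := dX R y1 y; set b := dX R y1 (flip0 y) => h1 h2 hab.
  have : `|b - a| < 4^-1.
    rewrite (_ : b - a = (c - a) - (c - b)); last by ring.
    apply: (le_lt_trans (ler_normB _ _)).
    by rewrite (_ : (4 : R)^-1 = 8^-1 + 8^-1) ?ltrD //; field.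
  by rewrite hab ltxx.
have hU : mu (E `|` flip0 @^-1` E) = (mu E + mu E)%E.
  rewrite -[X in _ = (_ + X)%E](@mu_flip R mu Hb E mE).
  exact: (measureU mu mE mF dis).
have le1 : (mu (E `|` flip0 @^-1` E) <= 1)%E.
  by rewrite -(probability_setT mu); apply: le_measure; rewrite ?inE //; exact: measurableU.
have fmu : mu E \is a fin_num.
  rewrite ge0_fin_numE //; apply: (le_lt_trans (probability_le1 mu mE)); exact: ltry.
move: le1; rewrite hU -(fineK fmu) -EFinD !lee_fin => h.
lra.
Qed.

Lemma xsectionE (T1 T2 : Type) (A : set (T1 * T2)) x : xsection A x = [set y | A (x, y)].
Proof. by apply/seteqP; split => y; rewrite /xsection /= inE. Qed.

Lemma int_le_cst d (T : measurableType d) (P : probability T R) (f : T -> \bar R) (c : R) :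
  measurable_fun setT f -> (forall x, (0 <= f x)%E) -> (forall x, (f x <= c%:E)%E) ->
  (\int[P]_x f x <= c%:E)%E.
Proof.
move=> mf f0 fc.
apply: (@le_trans _ _ (\int[P]_x (cst c%:E x))%E).
  by apply: ge0_le_integral => //; exact: measurable_cst.
rewrite integral_cst //.
have h : (c%:E * P setT <= c%:E)%E by rewrite probability_setT mule1.
exact: h.
Qed.

Lemma nu2_bound : (((mu \x mu) \x (mu \x mu)) S2 <= (2^-1)%:E)%E.
Proof.
change (\int[mu \x mu]_w1 ((mu \x mu) \o xsection S2) w1 <= (2^-1)%:E)%E.
apply: int_le_cst.
- exact: (measurable_fun_xsection ((mu \x mu)%E : probability (X * X)%type R) S2_meas).
- by move=> w1; exact: measure_ge0.
move=> [x1 y1] /=.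
change (\int[mu]_x2 (mu \o xsection (xsection S2 (x1, y1))) x2 <= (2^-1)%:E)%E.
apply: int_le_cst.
- exact: measurable_fun_xsection (measurable_xsection _ S2_meas).
- by move=> w1; exact: measure_ge0.
move=> x2 /=; rewrite !xsectionE.
exact: (inner_bound (dX R x1 x2) y1).
Qed.

Definition S1 : set ((X * X) * (X * X)) := [set w | G2 w = 0].

Lemma S1_meas : measurable S1.
Proof.
by have := mG2 measurableT _ (measurable_set1 (0 : R)); rewrite setTI.
Qed.

Lemma nu1 : (((lam R mu) \x (lam R mu)) S1 = 1)%E.
Proof.
change (\int[lam R mu]_w1 ((lam R mu) \o xsection S1) w1 = 1)%E.
rewrite /lam ge0_integral_distribution; last 2 first.
- exact: (measurable_fun_xsection (distribution mu diagf : probability (X * X)%type R) S1_meas).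
- by move=> w1; exact: measure_ge0.
apply: (@eq_trans _ _ (\int[mu]_x (cst 1%E x))%E).
  apply: eq_integral => x _ /=; rewrite xsectionE.
  change (mu (diagf @^-1` [set y | S1 (diagf x, y)]) = 1)%E.
  have -> : diagf @^-1` [set y | S1 (diagf x, y)] = setT.
    by apply/seteqP; split => // y _; rewrite /S1 /G2 /= subrr.
  exact: probability_setT.
rewrite integral_cst //.
have h : (1 * mu setT = 1)%E by rewrite probability_setT mule1.
exact: h.
Qed.

Section Cube.
Variable m : nat.
Hypothesis hm : (0 < m)%N.

Definition t0 : idx m := (@Ordinal 2 0 isT, @Ordinal 2 1 isT, Ordinal hm, Ordinal hm).

Definition hfun (u : cube2 R m) : R := u.1 t0 - u.2 t0.

Lemma mh : measurable_fun setT hfun.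
Proof.
apply: measurable_funB.
- exact: (measurableT_comp (@mcoordc m t0) measurable_fst).
- exact: (measurableT_comp (@mcoordc m t0) measurable_snd).
Qed.

Definition Aset : set (cube2 R m) := [set u | hfun u = 0].
Definition Bset : set (cube2 R m) := [set u | `|hfun u| < 8^-1].

Lemma Aset_meas : measurable Aset.
Proof. by have := mh measurableT _ (measurable_set1 (0 : R)); rewrite setTI. Qed.

Lemma Bset_meas : measurable Bset.
Proof.
have -> : Bset = hfun @^-1` `]-(8^-1), 8^-1[%classic.
  by apply/seteqP; split => w; rewrite /Bset /= in_itv /= ltr_norml.
by have := mh measurableT _ (measurable_itv `]-(8^-1 : R), 8^-1[); rewrite setTI.
Qed.

Lemma PhiA : (@Phi2 R m (lam R mu) Aset = 1)%E.
Proof.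
change ((((lam R mu) \x (lam R mu)) (Dmap R m @^-1` Aset)) = 1)%E.
rewrite (_ : Dmap R m @^-1` Aset = S1); first exact: nu1.
by apply/seteqP; split.
Qed.

Lemma PhiB : (@Phi2 R m (mu \x mu)%E Bset <= (2^-1)%:E)%E.
Proof.
change ((((mu \x mu) \x (mu \x mu)) (Dmap R m @^-1` Bset)) <= (2^-1)%:E)%E.
rewrite (_ : Dmap R m @^-1` Bset = S2); first exact: nu2_bound.
by apply/seteqP; split.
Qed.

Lemma dist_AB (u v : cube2 R m) : Aset u -> ~ Bset v -> 16^-1 <= cube_dist u v.
Proof.
rewrite /Aset /Bset /hfun /= => hu hv.
have hv' : 8^-1 <= `|v.1 t0 - v.2 t0| by rewrite leNgt; apply/negP.
set c := cube_dist u v.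
have key : forall (a : R) (F G : idx m -> R), (forall t, 0 <= F t) -> (forall t, 0 <= G t) ->
    F t0 = a ^+ 2 -> `|a| <= Num.sqrt (\sum_t F t + \sum_t G t).
  move=> a F G F0 G0 Fa; rewrite -sqrtr_sqr ler_sqrt; last first.
    by rewrite addr_ge0 // sumr_ge0.
  rewrite (bigD1 t0) //= Fa -addrA lerDl addr_ge0 // sumr_ge0 // => t _.
have h1 : `|u.1 t0 - v.1 t0| <= c.
  apply: key => // t; exact: sqr_ge0.
have h2 : `|u.2 t0 - v.2 t0| <= c.
  rewrite /c /cube_dist (addrC (\sum_(t : idx m) (u.1 t - v.1 t) ^+ 2)).
  apply: key => // t; exact: sqr_ge0.
have h3 : `|v.1 t0 - v.2 t0| <= `|u.1 t0 - v.1 t0| + `|u.2 t0 - v.2 t0|.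
  rewrite (_ : v.1 t0 - v.2 t0 = (u.2 t0 - v.2 t0) - (u.1 t0 - v.1 t0)); last first.
    have hu' : u.1 t0 = u.2 t0 by apply/eqP; rewrite -subr_eq0 hu.
    by rewrite hu'; ring.
  by apply: (le_trans (ler_normB _ _)); rewrite addrC.
lra.
Qed.

Lemma coupling_half (pi : probability (cube2 R m * cube2 R m)%type R) :
  coupling (@Phi2 R m (lam R mu)) (@Phi2 R m (mu \x mu)%E) pi ->
  ((2^-1)%:E <= pi (Aset `*` ~` Bset))%E.
Proof.
move=> [c1 c2].
have mA := Aset_meas; have mB := Bset_meas.
have hA : pi (Aset `*` setT) = 1%E by rewrite c1 // PhiA.
have hB : (pi (setT `*` Bset) <= (2^-1)%:E)%E by rewrite c2 // PhiB.
have mAB : measurable (Aset `*` Bset) by exact: measurableX.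
have mAnB : measurable (Aset `*` ~` Bset) by apply: measurableX => //; exact: measurableC.
have hU : pi (Aset `*` setT) = (pi (Aset `*` ~` Bset) + pi (Aset `*` Bset))%E.
  rewrite -measureU //.
    congr (pi _); apply/seteqP; split => [[u v] [/= hu _]|[u v] [[/= ? _]|[/= ? _]]] //.
    by case: (pselect (Bset v)) => hb; [right|left].
  by apply/seteqP; split => // -[u v] [[/= _ h1] [/= _ h2]]; exact: (h1 h2).
have hle : (pi (Aset `*` Bset) <= pi (setT `*` Bset))%E.
  apply: le_measure; first by rewrite inE.
    by rewrite inE; apply: measurableX.
  by move=> [u v] [/= _ h].
have f1 : pi (Aset `*` ~` Bset) \is a fin_num.
  rewrite ge0_fin_numE //; apply: (le_lt_trans (probability_le1 pi mAnB)); exact: ltry.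
have f2 : pi (Aset `*` Bset) \is a fin_num.
  rewrite ge0_fin_numE //; apply: (le_lt_trans (probability_le1 pi mAB)); exact: ltry.
rewrite hA -(fineK f1) -(fineK f2) -EFinD in hU.
have hU' := EFin_inj hU.
rewrite -(fineK f2) in hle.
have := le_trans hle hB; rewrite lee_fin => h'.
rewrite -(fineK f1) lee_fin.
lra.
Qed.

Lemma int_lb (pi : probability (cube2 R m * cube2 R m)%type R) (p : R) :
  0 <= p ->
  coupling (@Phi2 R m (lam R mu)) (@Phi2 R m (mu \x mu)%E) pi ->
  ((((16^-1 : R) `^ p) * 2^-1)%:E <= \int[pi]_uv ((cube_dist uv.1 uv.2) `^ p)%:E)%E.
Proof.
move=> p0 hc.
set k := (16^-1 : R) `^ p.
have k0 : 0 <= k := powR_ge0 _ _.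
have mS : measurable (Aset `*` ~` Bset).
  by apply: measurableX; [exact: Aset_meas|apply: measurableC; exact: Bset_meas].
pose hS := scale_nnsfun (indic_nnsfun R mS) k0.
rewrite ge0_integralTE; last by move=> uv; rewrite lee_fin powR_ge0.
apply: le_trans; last first.
  apply: ereal_sup_ubound; exists hS => // -[u v] /=.
  rewrite /hS /= mindicE; case: (boolP ((u, v) \in Aset `*` ~` Bset)) => hin.
    rewrite mulr1 lee_fin /k; apply: ge0_ler_powR => //.
    - by rewrite nnegrE.
    - by rewrite nnegrE /cube_dist sqrtr_ge0.
    move: hin; rewrite inE => -[/= hu hv]; exact: dist_AB.
  by rewrite mulr0 lee_fin powR_ge0.
rewrite (_ : sintegral _ _ = (k%:E * pi (Aset `*` ~` Bset))%E); last first.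
  rewrite -sintegral_indic; exact: sintegralrM.
rewrite EFinM; apply: lee_wpmul2l; first by rewrite lee_fin.
exact: coupling_half.
Qed.

Lemma Wp_lb (p : R) : 1 <= p ->
  ((32^-1 : R)%:E <= Wp p (@Phi2 R m (lam R mu)) (@Phi2 R m (mu \x mu)%E))%E.
Proof.
move=> p1.
have p0 : 0 < p by lra.
rewrite /Wp.
set I := ereal_inf _.
set k := (16^-1 : R) `^ p.
have k0 : 0 <= k := powR_ge0 _ _.
have hI : ((k * 2^-1)%:E <= I)%E.
  apply: le_ereal_inf_tmp => _ [pi hc <-]; exact: (@int_lb pi p (ltW p0) hc).
have : ((k * 2^-1)%:E `^ p^-1 <= I `^ p^-1)%E.
  apply: gt0_ler_poweR => //.
  - by rewrite invr_ge0 ltW.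
  - by rewrite in_itv /= leey andbT lee_fin mulr_ge0.
  - rewrite in_itv /= leey andbT; apply: le_trans hI; by rewrite lee_fin mulr_ge0.
rewrite poweR_EFin => h; apply: le_trans h; rewrite lee_fin.
rewrite powRM // /k -powRrM mulfV ?gt_eqF // powRr1 //.
have h2 : (2^-1 : R) <= (2^-1) `^ p^-1.
  apply: ger1_powR.
    by apply/andP; split; [|rewrite invf_le1]; lra.
  by rewrite invf_le1.
have -> : (32^-1 : R) = 16^-1 * 2^-1 by field.
by rewrite ler_pM2l //; lra.
Qed.
End Cube.
End Main.

Lemma num_ineq (R : realType) : 5 / (144 * Num.sqrt 2) <= (32^-1 : R).
Proof.
have s0 : 0 <= Num.sqrt (2 : R) := sqrtr_ge0 _.
have s2 : Num.sqrt (2 : R) * Num.sqrt 2 = 2 by rewrite -expr2 sqr_sqrtr.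
have s1 : 10 / 9 <= Num.sqrt (2 : R) by nra.
have sp : 0 < Num.sqrt (2 : R) by lra.
rewrite ler_pdivrMr ?mulr_gt0 //; lra.
Qed.

Local Close Scope classical_set_scope.

Theorem proposition18 (R : realType) (mu : probability X R) :
  bernoulli_half mu ->
  forall (m : nat) (p : R), (1 <= m)%N -> 1 <= p ->
  ((5 / (144 * Num.sqrt 2) : R)%:E <= Dep2 mu m p)%E.
Proof.
move=> Hb m p hm p1.
apply: (@le_trans _ _ ((32^-1 : R)%:E)); first by rewrite lee_fin num_ineq.
have W := @Wp_lb R mu Hb m hm p p1.
apply: (le_trans W).
apply: ereal_sup_ubound; exists (lam R mu) => //.
exact: lam_joining.
Qed.
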